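(* Let $\alpha_1>0$ and $\alpha_1+\alpha_2+1>0$, and suppose the loss scales as $\ell(N,D)\sim N^{-\alpha_N}+D^{-\alpha_D}$ with $\alpha_N=\alpha_1+\alpha_2+1$ and $\alpha_D=\frac{\alpha_1+\alpha_2+1}{\alpha_1+1}$. Under a fixed compute budget $C=ND\cdot\min\{N,D\}$, the unique compute-optimal allocation (minimizing $\ell$ subject to the budget) lies in the underparameterized regime $N<D$, and the optimal allocation and resulting loss scale as $$N^*(C)\sim C^{\alpha_D/(\alpha_N+2\alpha_D)}=C^{1/(\alpha_1+3)},\qquad D^*(C)\sim C^{1-2\alpha_D/(\alpha_N+2\alpha_D)}=C^{(\alpha_1+1)/(\alpha_1+3)},$$ $$\ell^*(C)\sim C^{-\alpha_C},\qquad \alpha_C:=\frac{\alpha_N\alpha_D}{\alpha_N+2\alpha_D}=\frac{\alpha_1+\alpha_2+1}{\alpha_1+3}>0.$$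
   Context: $N$ is the number of model parameters and $D$ the number of training samples; ''$\sim$'' denotes asymptotic scaling up to constants as $C\to\infty$. *)

(* Defs.v *)
From Stdlib Require Import Reals.
Open Scope R_scope.

(* Loss model  l(N,D) = A N^{-aN} + B D^{-aD}  (A, B > 0 are the constants hidden in "~"). *)
Definition loss (aN aD A B N D : R) : R :=
  A * Rpower N (- aN) + B * Rpower D (- aD).

Definition compute (N D : R) : R := N * D * Rmin N D.

Definition is_optimal (aN aD A B C N D : R) : Prop :=
  0 < N /\ 0 < D /\ compute N D = C /\
  forall N' D', 0 < N' -> 0 < D' -> compute N' D' = C ->
    loss aN aD A B N D <= loss aN aD A B N' D'.

Definition asymp (f g : R -> R) : Prop :=
  exists c1 c2 C0, 0 < c1 /\ 0 < c2 /\
    forall C, C0 <= C -> c1 * g C <= f C /\ f C <= c2 * g C.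

Definition alphaN (a1 a2 : R) : R := a1 + a2 + 1.
Definition alphaD (a1 a2 : R) : R := (a1 + a2 + 1) / (a1 + 1).
Definition alphaC (a1 a2 : R) : R :=
  alphaN a1 a2 * alphaD a1 a2 / (alphaN a1 a2 + 2 * alphaD a1 a2).

(* Main.v *)
Require Import Defs.
From Stdlib Require Import Reals Lra Psatz.
Open Scope R_scope.


Lemma tangent (A B s d c n m : R) : 0<A -> 0<B -> 0<s -> 0<d ->
  s*A*exp(-s*m) = 2*d*B*exp(-(d*c)+2*d*m) ->
  A*exp(-s*m)+B*exp(-(d*c)+2*d*m) <= A*exp(-s*n)+B*exp(-(d*c)+2*d*n) /\
  (n <> m -> A*exp(-s*m)+B*exp(-(d*c)+2*d*m) < A*exp(-s*n)+B*exp(-(d*c)+2*d*n)).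
Proof.
  intros hA hB hs hd heq.
  set (t := n - m).
  assert (E1 : exp(-s*n) = exp(-s*m) * exp(-s*t)) by (rewrite <- exp_plus; f_equal; unfold t; ring).
  assert (E2 : exp(-(d*c)+2*d*n) = exp(-(d*c)+2*d*m) * exp(2*d*t)) by (rewrite <- exp_plus; f_equal; unfold t; ring).
  rewrite E1, E2.
  set (P := exp(-s*m)) in *. set (Q := exp(-(d*c)+2*d*m)) in *.
  assert (hP : 0 < P) by apply exp_pos. assert (hQ : 0 < Q) by apply exp_pos.
  assert (H1 := exp_ineq1_le (-s*t)). assert (H2 := exp_ineq1_le (2*d*t)).
  assert (K : t*(s*(A*P)) = t*(2*(d*(B*Q)))) by (replace (s*(A*P)) with (s*A*P) by ring; rewrite heq; ring).
  assert (H1' : A*P*(1 + -s*t) <= A*P*exp(-s*t)) by (apply Rmult_le_compat_l; [nra|lra]).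
  assert (H2' : B*Q*(1 + 2*d*t) <= B*Q*exp(2*d*t)) by (apply Rmult_le_compat_l; [nra|lra]).
  split.
  - nra.
  - intro hnm. assert (t <> 0) by (unfold t; lra).
    destruct (Rlt_or_le 0 t) as [ht|ht].
    + assert (H3 := exp_ineq1 (2*d*t) ltac:(nra)).
      assert (H3' : B*Q*(1 + 2*d*t) < B*Q*exp(2*d*t)) by (apply Rmult_lt_compat_l; [nra|lra]).
      nra.
    + assert (H3 := exp_ineq1 (-s*t) ltac:(nra)).
      assert (H3' : A*P*(1 + -s*t) < A*P*exp(-s*t)) by (apply Rmult_lt_compat_l; [nra|lra]).
      nra.
Qed.

Lemma ln_ge (x y : R) : 0 < x -> x <= y -> ln x <= ln y.
Proof. intros hx [h|h]. - left; apply ln_increasing; lra. - subst; lra. Qed.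

Theorem proposition2 (a1 a2 A B : R) :
  0 < a1 -> 0 < a1 + a2 + 1 -> 0 < A -> 0 < B ->
  alphaD a1 a2 / (alphaN a1 a2 + 2 * alphaD a1 a2) = 1 / (a1 + 3) /\
  1 - 2 * alphaD a1 a2 / (alphaN a1 a2 + 2 * alphaD a1 a2) = (a1 + 1) / (a1 + 3) /\
  alphaC a1 a2 = (a1 + a2 + 1) / (a1 + 3) /\
  0 < alphaC a1 a2 /\
  exists (Nstar Dstar : R -> R) (C0 : R),
    (forall C, C0 <= C ->
       is_optimal (alphaN a1 a2) (alphaD a1 a2) A B C (Nstar C) (Dstar C) /\
       (forall N D, is_optimal (alphaN a1 a2) (alphaD a1 a2) A B C N D ->
          N = Nstar C /\ D = Dstar C) /\
       Nstar C < Dstar C) /\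
    asymp Nstar (fun C => Rpower C (alphaD a1 a2 / (alphaN a1 a2 + 2 * alphaD a1 a2))) /\
    asymp Dstar (fun C => Rpower C (1 - 2 * alphaD a1 a2 / (alphaN a1 a2 + 2 * alphaD a1 a2))) /\
    asymp (fun C => loss (alphaN a1 a2) (alphaD a1 a2) A B (Nstar C) (Dstar C))
          (fun C => Rpower C (- alphaC a1 a2)).
Proof.
  intros h1 h2 hA hB.
  unfold alphaC.
  assert (Hs : alphaN a1 a2 = a1+a2+1) by reflexivity.
  assert (Hd : alphaD a1 a2 = alphaN a1 a2/(a1+1)) by reflexivity.
  generalize dependent (alphaD a1 a2). generalize dependent (alphaN a1 a2).
  intros s Hs d Hd. subst s.
  set (s := a1+a2+1) in *.
  clearbody s. assert (hs : 0 < s) by exact h2.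
  assert (hd : 0 < d) by (subst d; apply Rdiv_lt_0_compat; lra).
  set (e := s + 2*d).
  assert (he : 0 < e) by (unfold e; lra).
  assert (Ide : d / e = 1/(a1+3)) by (unfold e; subst d; field; split; nra).
  assert (Iae : s*d/e = s/(a1+3)) by (unfold Rdiv at 1; rewrite Rmult_assoc; fold (d/e); rewrite Ide; field; lra).
  assert (hac : 0 < s*d/e) by (rewrite Iae; apply Rdiv_lt_0_compat; lra).
  split; [exact Ide|].
  split; [replace (2*d/e) with (2*(d/e)) by (unfold Rdiv; ring); rewrite Ide; field; lra|].
  split; [exact Iae|].
  split; [exact hac|].
  set (lk := (ln(s*A) - ln(2*d*B))/e).
  set (nst := fun c => lk + d*c/e).
  set (L0 := A*exp(-s*lk) + B*exp(2*d*lk)).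
  assert (hL0 : 0 < L0) by (unfold L0; pose proof (exp_pos (-s*lk)); pose proof (exp_pos (2*d*lk)); nra).
  set (g := 1 - 3*d/e).
  assert (hg : 0 < g) by (unfold g; replace (3*d/e) with (3*(d/e)) by (unfold Rdiv; ring); rewrite Ide;
     replace (1 - 3*(1/(a1+3))) with (a1/(a1+3)) by (field; lra); apply Rdiv_lt_0_compat; lra).
  set (h := s*d/e - d/3).
  assert (hh : 0 < h) by (unfold h; rewrite Iae; subst d;
     replace (s/(a1+3) - s/(a1+1)/3) with (2*s*a1/(3*(a1+1)*(a1+3))) by (field; lra);
     apply Rdiv_lt_0_compat; nra).
  set (c1 := (ln L0 - ln B)/h).
  set (c2 := 3*lk/g).
  set (C0 := exp(Rmax 0 (Rmax c1 c2) + 1)).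
  assert (Lform : forall c, A*exp(-s*nst c) + B*exp(-d*(c - 2*nst c)) = L0 * exp(-(s*d/e)*c)).
  { intro c. unfold L0, nst. rewrite Rmult_plus_distr_r, !Rmult_assoc, <- !exp_plus.
    f_equal; f_equal; f_equal. field; lra. unfold e. field. unfold e in he. lra. }
  exists (fun C => exp (nst (ln C))), (fun C => exp (ln C - 2*nst (ln C))), C0.
  split.
  { intros C HC.
    assert (hC0 : 0 < C0) by apply exp_pos.
    assert (hC : 0 < C) by lra.
    set (c := ln C).
    assert (hc : Rmax 0 (Rmax c1 c2) + 1 <= c) by (unfold c; rewrite <- (ln_exp (_ + 1)); apply ln_ge; [apply exp_pos| exact HC]).
    pose proof (Rmax_l 0 (Rmax c1 c2)). pose proof (Rmax_r 0 (Rmax c1 c2)).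
    pose proof (Rmax_l c1 c2). pose proof (Rmax_r c1 c2).
    assert (hcc1 : c1 < c) by lra. assert (hcc2 : c2 < c) by lra.
    assert (K1 : ln L0 - ln B < c*h).
    { replace (ln L0 - ln B) with (c1*h) by (unfold c1; field; lra). apply Rmult_lt_compat_r; lra. }
    assert (K2 : 3*lk < c*g).
    { replace (3*lk) with (c2*g) by (unfold c2; field; lra). apply Rmult_lt_compat_r; lra. }
    assert (Nlt : nst c < c - 2*nst c).
    { unfold nst. unfold g in K2. replace (c*(1-3*d/e)) with (c - 3*(d*c/e)) in K2 by (field; lra). lra. }
    assert (Cexp : C = exp c) by (unfold c; rewrite exp_ln; auto).
    assert (Lbig : L0 * exp(-(s*d/e)*c) < B * exp(-(d*c/3))).
    { rewrite <- (exp_ln L0) by auto. rewrite <- (exp_ln B) by auto. rewrite <- !exp_plus.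
      apply exp_increasing. unfold h in K1. nra. }
    assert (Main : forall N D, 0 < N -> 0 < D -> compute N D = C ->
       L0 * exp(-(s*d/e)*c) <= loss s d A B N D /\
       (loss s d A B N D <= L0 * exp(-(s*d/e)*c) -> N = exp (nst c) /\ D = exp (c - 2*nst c))).
    { intros N D hN hD hcomp. unfold loss, Rpower. unfold compute in hcomp.
      destruct (Rle_or_lt N D) as [hND|hND].
      - rewrite Rmin_left in hcomp by auto.
        assert (lnD : ln D = c - 2*ln N).
        { unfold c. rewrite <- hcomp, !ln_mult by (try apply Rmult_lt_0_compat; auto). ring. }
        rewrite lnD. rewrite <- Lform.
        assert (R1 : forall x, -d*(c - 2*x) = -(d*c) + 2*d*x) by (intro; ring).
        rewrite !R1.
        assert (Heq : s*A*exp(-s*nst c) = 2*d*B*exp(-(d*c)+2*d*nst c)).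
        { rewrite <- (exp_ln (s*A)) by nra. rewrite <- (exp_ln (2*d*B)) by nra.
          rewrite <- !exp_plus. f_equal. unfold nst, lk, e. field. unfold e in he; lra. }
        destruct (tangent A B s d c (ln N) (nst c) hA hB hs hd Heq) as [T1 T2].
        split; [exact T1|].
        intro hle. destruct (Req_dec (ln N) (nst c)) as [E|E].
        + split. rewrite <- E, exp_ln; auto.
          rewrite <- E, <- lnD, exp_ln; auto.
        + exfalso. specialize (T2 E). lra.
      - rewrite Rmin_right in hcomp by lra.
        assert (lnC : c = ln N + 2*ln D).
        { unfold c. rewrite <- hcomp, !ln_mult by (try apply Rmult_lt_0_compat; auto). ring. }
        assert (lnlt : ln D < ln N) by (apply ln_increasing; auto).
        assert (G1 : B * exp(-(d*c/3)) < B*exp(-d*ln D)).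
        { apply Rmult_lt_compat_l; auto. apply exp_increasing. nra. }
        assert (G2 : 0 < A*exp(-s*ln N)) by (apply Rmult_lt_0_compat; auto; apply exp_pos).
        split; [lra|]. intro; exfalso; lra. }
    assert (Opt : is_optimal s d A B C (exp (nst c)) (exp (c - 2*nst c))).
    { assert (ex : exp (nst c) < exp (c - 2*nst c)) by (apply exp_increasing; auto).
      assert (cm : compute (exp (nst c)) (exp (c - 2*nst c)) = C).
      { unfold compute. rewrite Rmin_left by lra. rewrite <- !exp_plus, Cexp. f_equal; ring. }
      repeat split; try apply exp_pos; auto.
      intros N' D' hN' hD' hc'.
      replace (loss s d A B (exp (nst c)) (exp (c - 2 * nst c))) with (L0 * exp(-(s*d/e)*c)).
      apply (Main N' D' hN' hD' hc').
      unfold loss, Rpower. rewrite !ln_exp, <- Lform. f_equal; f_equal; f_equal; ring. }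
    split; [exact Opt|]. split.
    - intros N D [hN [hD [hcomp hopt]]].
      apply (Main N D hN hD hcomp).
      destruct Opt as [_ [_ [hc' _]]].
      pose proof (hopt _ _ (exp_pos _) (exp_pos _) hc').
      replace (loss s d A B (exp (nst c)) (exp (c - 2 * nst c))) with (L0 * exp(-(s*d/e)*c)) in H3; auto.
      unfold loss, Rpower. rewrite !ln_exp, <- Lform. f_equal; f_equal; f_equal; ring.
    - apply exp_increasing; auto. }
  split; [|split].
  - exists (exp lk), (exp lk), 1. split; [apply exp_pos|]. split; [apply exp_pos|].
    intros C HC. unfold Rpower. rewrite <- exp_plus.
    replace (lk + d/e*ln C) with (nst (ln C)) by (unfold nst; field; lra). lra.
  - exists (exp (-2*lk)), (exp (-2*lk)), 1. split; [apply exp_pos|]. split; [apply exp_pos|].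
    intros C HC. unfold Rpower. rewrite <- exp_plus.
    replace (-2*lk + (1 - 2*d/e)*ln C) with (ln C - 2*nst (ln C)) by (unfold nst; field; lra). lra.
  - exists L0, L0, 1. split; [auto|]. split; [auto|].
    intros C HC. unfold loss, Rpower. rewrite !ln_exp.
    rewrite Lform. lra.
Qed.
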